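(* Let $(X_n)_{n\ge0}$ be the Kendall random walk with step distribution $\nu\in\mathcal P_s$, $\nu(\{0\})=0$, let $a\ge0$, and let $\tau^{-}_{a,w}=\min\{n\ge1: X_n\le a\}$ (weak descending ladder epoch, $\min\emptyset=\infty$). Then $\mathbb P(\tau^-_{a,w}=1)=F(a)$ and for every $n\ge0$ $$\mathbb P(\tau^-_{a,w}>n+1)=\frac1{2^n}\big(1-F(a)\big).$$
   Context: Fix $\alpha>0$. $\mathcal P_s$ is the set of symmetric Borel probability measures on $\mathbb R$. For $x\in\mathbb R$, $\widetilde\delta_x=\frac12(\delta_x+\delta_{-x})$. For a probability measure $\lambda=\mathcal L(X)$ and $c>0$, $T_c\lambda=\mathcal L(cX)$, and $T_0\lambda=\delta_0$. $\widetilde\pi_{2\alpha}$ is the symmetric Pareto probability measure with density $\alpha|y|^{-2\alpha-1}\mathbf 1_{\{|y|\ge1\}}$. The Kendall convolution $\vartriangle_\alpha$ on $\mathcal P_s$ is defined by $\widetilde\delta_x\vartriangle_\alpha\widetilde\delta_y=T_M\big(\varrho^\alpha\widetilde\pi_{2\alpha}+(1-\varrho^\alpha)\widetilde\delta_1\big)$ where $M=\max(|x|,|y|)$, $m=\min(|x|,|y|)$, $\varrho=m/M$ (and $\varrho=0$ if $M=0$), extended by $(\nu_1\vartriangle_\alpha\nu_2)(A)=\int\int(\widetilde\delta_x\vartriangle_\alpha\widetilde\delta_y)(A)\,\nu_1(dx)\nu_2(dy)$. For $x\in\mathbb R$ and $\mu\in\mathcal P_s$ we write $\delta_x\vartriangle_\alpha\mu:=\widetilde\delta_x\vartriangle_\alpha\mu$.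 $F(t)=\nu((-\infty,t])$. The Kendall random walk with step distribution $\nu$ is the Markov chain $(X_n)_{n\ge0}$ with $X_0=0$ and transition kernel $\mathbb P(X_{k+1}\in A\mid X_k=x)=(\delta_x\vartriangle_\alpha\nu)(A)$. *)

(* Defs.v *)
From HB Require Import structures.
From mathcomp Require Import all_boot all_order all_algebra.
From mathcomp Require Import all_classical all_reals all_analysis.
Set Implicit Arguments. Unset Strict Implicit. Unset Printing Implicit Defensive.
Import Order.TTheory GRing.Theory Num.Theory numFieldNormedType.Exports.
Local Open Scope classical_set_scope.
Local Open Scope ring_scope.

Section Kendall.
Variable R : realType.

(* integral of g against the symmetric Pareto law ~pi_{2alpha}, given by its
   density alpha |z|^(-2alpha-1) 1_{|z|>=1} w.r.t. Lebesgue measure *)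
Definition pareto_int (alpha : R) (g : R -> \bar R) : \bar R :=
  (\int[lebesgue_measure]_(z in [set z : R | (1 <= `|z|)%R])
     (g z * (alpha * (`|z| `^ (- (2 * alpha) - 1)))%R%:E))%E.

(* integral of g against ~delta_u (Kendall-conv) ~delta_y
   = T_M (rho^alpha ~pi_{2alpha} + (1 - rho^alpha) ~delta_1) *)
Definition kendall_pair_int (alpha : R) (g : R -> \bar R) (u y : R) : \bar R :=
  let M := Num.max `|u| `|y| in
  let m := Num.min `|u| `|y| in
  if M == 0 then g 0 (* T_0 lambda = delta_0 *)
  else let rho := m / M in
   ((rho `^ alpha)%R%:E * pareto_int alpha (fun z : R => g (M * z)%R)
    + (1 - rho `^ alpha)%R%:E * ((2^-1)%R%:E * (g M + g (- M)%R)))%E.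

(* integral of g against delta_x (Kendall-conv) nu
   = int int (~delta_u (Kendall-conv) ~delta_y) ~delta_x(du) nu(dy) *)
Definition kendall_step (alpha : R) (nu : probability R R) (g : R -> \bar R)
  (x : R) : \bar R :=
  (\int[nu]_y ((2^-1)%R%:E *
     (kendall_pair_int alpha g x y + kendall_pair_int alpha g (- x)%R y)))%E.

(* path_int n A x = P_x(X_1 in A 1, ..., X_n in A n) for the chain with
   transition kernel x |-> delta_x (Kendall-conv) nu *)
Fixpoint path_int (alpha : R) (nu : probability R R) (n : nat)
  (A : nat -> set R) (x : R) : \bar R :=
  match n with
  | 0 => 1%E
  | n'.+1 => kendall_step alpha nu
      (fun z => ((\1_(A 1%N) z)%:E * path_int alpha nu n' (fun k => A k.+1) z)%E) x
  end.

(* X is the Kendall random walk with step distribution nu started at X_0 = 0: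
   its finite-dimensional distributions are those of the Markov chain with
   X_0 = 0 and transition kernel P(X_{k+1} in A | X_k = x) = (delta_x Kendall-conv nu)(A). *)
Definition is_kendall_walk (alpha : R) (nu : probability R R)
  (d : measure_display) (T : measurableType d) (P : probability T R)
  (X : nat -> T -> R) : Prop :=
  (forall n, measurable_fun setT (X n)) /\
  (forall (n : nat) (A : nat -> set R), (forall k, measurable (A k)) ->
     P [set w | forall k, (k <= n)%N -> A k (X k w)]
     = ((\1_(A 0%N) 0)%:E * path_int alpha nu n A 0)%E).

End Kendall.

(* minimal n with p n, or None (= infinity) if there is none *)
Definition first_hit (p : nat -> Prop) : option nat :=
  if `[< exists n, p n >] then
    Some (xget 0%N [set n | p n /\ forall m, p m -> (n <= m)%N])
  else None.

Definition weak_desc_ladder (R : realType) {d} {T : measurableType d}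
  (a : R) (X : nat -> T -> R) (w : T) : option nat :=
  first_hit (fun n => (1 <= n)%N /\ X n w <= a).

(* Main.v *)
Require Import Defs.
From HB Require Import structures.
From mathcomp Require Import all_boot all_order all_algebra.
From mathcomp Require Import all_classical all_reals all_analysis.
From mathcomp Require Import ring lra.
Import Order.TTheory GRing.Theory Num.Theory numFieldNormedType.Exports.
Local Open Scope classical_set_scope.
Local Open Scope ring_scope.

Section P.
Variable R : realType.

Lemma powR_cvgy0 (p : R) : 0 < p -> x `^ (- p) @[x --> +oo] --> 0.
Proof.
move=> p0; apply/cvgrPdist_lt => e e0.
have K0 : 0 < (e^-1) `^ (p^-1) by rewrite powR_gt0 // invr_gt0.
near=> x.
have x0 : 0 < x by near: x; exact: nbhs_pinfty_gt.
have xK : (e^-1) `^ (p^-1) < x by near: x; apply: nbhs_pinfty_gt; rewrite num_real.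
rewrite sub0r normrN ger0_norm ?powR_ge0 // powRN.
rewrite -[e]invrK ltf_pV2 ?posrE ?invr_gt0 ?powR_gt0 //.
have := gt0_ltr_powR p0 _ _ xK; rewrite !nnegrE (ltW K0) (ltW x0) => /(_ isT isT).
by rewrite -powRrM mulVf ?gt_eqF // powRr1 // ltW // invr_gt0.
Unshelve. all: by end_near. Qed.

Lemma pareto_ftc (alpha c : R) : 0 < alpha -> 0 <= c ->
  (\int[lebesgue_measure]_(z in `[1%R, +oo[%classic)
     (c * (alpha * (`|z| `^ (- (2 * alpha) - 1))))%:E = (c / 2)%:E)%E.
Proof.
move=> a0 c0.
set F := fun x : R => - (c / 2) * x `^ (- (2 * alpha)).
have dF (x : R) : 0 < x -> is_derive x 1 F (c * (alpha * (x `^ (- (2 * alpha) - 1)))).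
  move=> x0; have := is_deriveZ (- (c / 2)) (is_derive1_powR (- (2 * alpha)) x0).
  have -> : (- (c / 2)) *: (- (2 * alpha) * x `^ (- (2 * alpha) - 1)) =
     c * (alpha * (x `^ (- (2 * alpha) - 1))).
    by rewrite /GRing.scale /=; field.
  by [].
have -> : (c / 2 = 0 - F 1) by rewrite /F powR1 mulr1 sub0r opprK.
under eq_integral => z.
  rewrite inE /= in_itv /= andbT => z1.
  rewrite ger0_norm; last by apply: le_trans z1.
  over.
apply: ge0_continuous_FTC2y.
- move=> x x1; rewrite mulr_ge0 // mulr_ge0 ?ltW //.
  by apply: powR_gt0; apply: lt_le_trans x1.
- apply: continuous_in_subspaceT => x; rewrite inE /= in_itv /= andbT => x1.
  have x0 : 0 < x by apply: lt_le_trans x1.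
  have hp : {for (x : R), continuous (@powR R ^~ (- (2 * alpha) - 1))}.
    apply: differentiable_continuous; apply/derivable1_diffP.
    by apply: derivable_powR; rewrite in_itv /= andbT.
  have hc : {for (x : R), continuous (fun z : R => c * (alpha * z `^ (- (2 * alpha) - 1)))}.
    by apply: cvgMr; apply: cvgMr; exact: hp.
  exact: hc.
- rewrite /F -[0](mulr0 (- (c / 2))); apply: cvgMr.
  apply: powR_cvgy0; exact: mulr_gt0.
- move=> x x1; have x0 : 0 < x by apply: lt_trans x1.
  by have [] := dF x x0.
- apply: cvg_at_right_filter; apply: differentiable_continuous.
  by apply/derivable1_diffP; have [] := dF 1 ltr01.
- move=> x; rewrite in_itv /= andbT => x1; have x0 : 0 < x by apply: lt_trans x1.
  by rewrite derive1E; have [_ ->] := dF x x0.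
Qed.

Lemma pareto_half (alpha c : R) (g : R -> \bar R) : 0 < alpha -> 0 <= c ->
  (forall z, 1 <= `|z| -> g z = (if 0 < z then c else 0)%:E) ->
  pareto_int alpha g = (c / 2)%:E.
Proof.
move=> a0 c0 hg; rewrite /pareto_int.
transitivity (\int[lebesgue_measure]_(z in [set z : R | (1 <= `|z|)%R])
   ((fun z : R => (c * (alpha * (`|z| `^ (- (2 * alpha) - 1))))%R%:E) \_ `[1%R, +oo[%classic) z)%E.
  apply: eq_integral => z; rewrite inE /= => z1.
  rewrite hg // /patch (_ : (z \in _) = (1 <= z)); last first.
    by apply/idP/idP; rewrite in_setE /= in_itv /= andbT.
  have [zp|zn] := ltP 0 z.
    have z1p : 1 <= z by move: z1; rewrite ger0_norm // ltW.
    by rewrite z1p EFinM.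
  rewrite ifF ?mul0e //; apply/negbTE; rewrite -ltNge.
  by apply: le_lt_trans zn _.
rewrite -integral_mkcondr.
have -> : [set z : R | 1 <= `|z|] `&` `[1%R, +oo[%classic = `[1%R, +oo[%classic.
  apply/seteqP; split => z /=; first by case.
  rewrite in_itv /= andbT => z1; split => //.
  by rewrite ger0_norm // (le_trans ler01 z1).
exact: pareto_ftc.
Qed.

Lemma indic_oy (a z : R) : \1_(`]a, +oo[%classic) z = (if a < z then 1 else 0 : R).
Proof.
rewrite indicE (_ : (z \in _) = (a < z)); first by case: (a < z) => /=.
 apply/idP/idP.
  by rewrite in_setE /= in_itv /= andbT.
by move=> h; rewrite in_setE /= in_itv /= andbT.
Qed.

Lemma indic_Ny (a z : R) : \1_(`]-oo, a]%classic) z = (if z <= a then 1 else 0 : R).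
Proof.
rewrite indicE (_ : (z \in _) = (z <= a)); first by case: (z <= a) => /=.
 apply/idP/idP.
  by rewrite in_setE /= in_itv /=.
by move=> h; rewrite in_setE /= in_itv /=.
Qed.

Lemma pair_pos (alpha c u y : R) (g : R -> \bar R) : 0 < alpha -> 0 <= c ->
  let M := Num.max `|u| `|y| in 0 < M ->
  g M = c%:E -> g (- M) = 0%E ->
  (forall z, 1 <= `|z| -> g (M * z) = (if 0 < z then c else 0)%:E) ->
  kendall_pair_int alpha g u y = (c / 2)%:E.
Proof.
move=> a0 c0 M M0 gM gNM gz.
rewrite /kendall_pair_int -/M (gt_eqF M0).
rewrite (@pareto_half alpha c _ a0 c0); last exact: gz.
rewrite gM gNM adde0 -!EFinM -EFinD.
congr (_ %:E); ring.
Qed.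

Lemma pair_zero (alpha y : R) (g : R -> \bar R) : 0 < alpha -> y != 0 ->
  kendall_pair_int alpha g 0 y = ((2^-1)%:E * (g (`|y|)%R + g (- `|y|)%R))%E.
Proof.
move=> a0 y0.
rewrite /kendall_pair_int normr0.
have -> : Num.max 0 `|y| = `|y| by rewrite max_r.
have -> : Num.min 0 `|y| = 0 by rewrite min_l.
rewrite normr_eq0 (negbTE y0) mul0r powR0 ?gt_eqF // mul0e add0e subr0 mul1e.
by [].
Qed.

Lemma path_B (alpha a : R) (nu : probability R R) : 0 < alpha -> 0 <= a ->
  forall m x, a < `|x| ->
  path_int alpha nu m (fun _ => `]a, +oo[%classic) x = (2 ^- m)%:E.
Proof.
move=> a0 ha; elim => [|m IH] x ax.
  by rewrite /= expr0 invr1.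
rewrite /= /kendall_step.
set g := (fun z : R => ((\1_(`]a, +oo[%classic) z)%:E * _ z)%E).
have hp u y : a < `|u| -> kendall_pair_int alpha g u y = ((2 ^- m) / 2)%:E.
  move=> au.
  have aM : a < Num.max `|u| `|y| by rewrite lt_max au.
  have M0 : 0 < Num.max `|u| `|y| by apply: le_lt_trans aM.
  apply: pair_pos => //.
  - by rewrite /g indic_oy aM mul1e IH // gtr0_norm.
  - rewrite /g indic_oy ifF ?mul0e //; apply/negbTE; rewrite -leNgt.
    by apply: le_trans ha; rewrite oppr_le0 ltW.
  - move=> z z1; rewrite /g indic_oy.
    have [zp|zn] := ltP 0 z.
      have Mz : Num.max `|u| `|y| <= Num.max `|u| `|y| * z.
        by apply: ler_peMr; [exact: ltW | rewrite -(gtr0_norm zp)].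
      rewrite ifT; last by apply: lt_le_trans Mz.
      rewrite mul1e IH //; apply: lt_le_trans aM _.
      rewrite normrM gtr0_norm //; apply: ler_peMr => //; exact: ltW.
    rewrite ifF ?mul0e //; apply/negbTE; rewrite -leNgt.
    by apply: le_trans ha; rewrite pmulr_rle0.
under eq_integral => y _.
  rewrite (hp x y ax) (hp (- x) y); last by rewrite normrN.
  over.
rewrite integral_cst //. have h1 := probability_setT nu. rewrite [X in (_ * X)%E]h1 mule1.
congr (_ %:E); rewrite exprS invfM; field; by rewrite expf_neq0.
Qed.

Definition Sa (a : R) : set R := `]a, +oo[%classic `|` `]-oo, (- a)%R[%classic.

Lemma indic_Sa (a y : R) : 0 <= a -> \1_(Sa a) y = (if a < `|y| then 1 else 0 : R).
Proof.
move=> ha; rewrite indicE (_ : (y \in _) = (a < `|y|)); first by case: (a < `|y|).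
rewrite ltr_normr; apply/idP/idP.
  rewrite in_setE /Sa /= !in_itv /= andbT => -[->//|h].
  by rewrite ltrNr h orbT.
rewrite in_setE /Sa /= !in_itv /= andbT => /orP[h|h]; first by left.
by right; rewrite ltrNr.
Qed.

Lemma path_tail (alpha a : R) (nu : probability R R) (n : nat) :
  0 < alpha -> 0 <= a ->
  path_int alpha nu n.+1 (fun k => if k is 0 then setT else `]a, +oo[%classic) 0
  = ((2 ^- n / 2)%:E * nu (Sa a))%E.
Proof.
move=> a0 ha.
rewrite /= /kendall_step oppr0.
set g := (fun z : R => ((\1_(`]a, +oo[%classic) z)%:E * _ z)%E).
have hy y : ((2^-1)%:E * (kendall_pair_int alpha g 0 y + kendall_pair_int alpha g 0 y))%E
   = ((2 ^- n / 2) * \1_(Sa a) y)%:E.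
  rewrite indic_Sa //.
  have [->|y0] := eqVneq y 0.
    rewrite /kendall_pair_int normr0 maxxx eqxx /g indic_oy ltNge ha /= mul0e.
    by rewrite mulr0 adde0 mule0.
  rewrite pair_zero // /g !indic_oy.
  rewrite (ifF (b := a < - `|y|)); last first.
    apply/negbTE; rewrite -leNgt; apply: le_trans ha; rewrite oppr_le0 //.
  rewrite mul0e adde0.
  have [ay|ay] := ltP a `|y|.
    rewrite mul1e path_B //; last by rewrite normr_id.
    rewrite -EFinM; congr (_ %:E); field; exact: expf_neq0.
  have z0 (x : \bar R) : ((0:R)%:E * x = 0)%E by rewrite mul0e.
  by rewrite !z0 mule0 adde0 mule0 mulr0.
under eq_integral => y _ do rewrite hy.
rewrite (@integralZl_indic _ _ _ nu setT measurableT (fun=> Sa a)); last 2 first.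
- by move=> h; exfalso; move: h; apply/negP; rewrite -leNgt divr_ge0 // invr_ge0 exprn_ge0.
- by apply: measurableU; exact: measurable_itv.
rewrite integral_indic //; last by apply: measurableU; exact: measurable_itv.
transitivity ((2 ^- n / 2)%:E * nu (Sa a `&` setT))%E; first by [].
by rewrite setIT.
Qed.

Lemma final_arith (a : R) (nu : probability R R) (n : nat) : 0 <= a ->
  (forall A : set R, measurable A -> nu [set x | A (- x)] = nu A) ->
  ((2 ^- n / 2)%:E * nu (Sa a))%E = ((2 ^- n)%:E * (1 - nu `]-oo, a]%classic))%E.
Proof.
move=> ha hsym.
have eG : nu `]-oo, (- a)%R[%classic = nu `]a, +oo[%classic.
  rewrite -hsym; last exact: measurable_itv.
  congr (nu _); apply/seteqP; split => x /=; rewrite !in_itv /= ?andbT.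
    by rewrite ltrN2.
  by rewrite ltrN2.
have eU : nu (Sa a) = (nu `]a, +oo[%classic + nu `]-oo, (- a)%R[%classic)%E.
  rewrite /Sa measureU //; try exact: measurable_itv.
  apply/seteqP; split => x //=; rewrite !in_itv /= andbT => -[h1 h2].
  by have := lt_trans h1 h2; lra.
have eT : (nu `]-oo, a]%classic + nu `]a, +oo[%classic)%E = 1%E.
  rewrite -measureU //; try exact: measurable_itv.
    rewrite -(probability_setT nu); congr (nu _); apply/seteqP; split => x //= _.
    by rewrite !in_itv /= andbT; case: (leP x a) => h; [left|right].
  apply/seteqP; split => x //=; rewrite !in_itv /= andbT => -[h1 h2].
  by have := le_lt_trans h1 h2; rewrite ltxx.
have fF : nu `]-oo, a]%classic \is a fin_num by apply: fin_num_measure; exact: measurable_itv.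
have fG : nu `]a, +oo[%classic \is a fin_num by apply: fin_num_measure; exact: measurable_itv.
rewrite eU eG -(fineK fF) -(fineK fG) in eT *.
have eT' : fine (nu `]-oo, a]%classic) + fine (nu `]a, +oo[%classic) = 1.
  by apply: EFin_inj; rewrite EFinD.
rewrite -EFinD -EFinM -EFinB -EFinM; congr (_ %:E).
have -> : 1 - fine (nu `]-oo, a]%classic) = fine (nu `]a, +oo[%classic) by rewrite -eT'; ring.
field; exact: expf_neq0.
Qed.

End P.

Lemma first_hitP (p : nat -> Prop) :
  match first_hit p with
  | Some k => p k /\ (forall m, p m -> (k <= m)%N)
  | None => forall m, ~ p m
  end.
Proof.
rewrite /first_hit; case: asboolP => [[n pn]|nex]; last first.
  by move=> m pm; apply: nex; exists m.
have exb : exists n, `[< p n >] by exists n; apply/asboolP.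
have ex2 : exists k, p k /\ (forall m, p m -> (k <= m)%N).
  case: (ex_minnP exb) => k /asboolP pk hmin; exists k; split => // m pm.
  by apply: hmin; apply/asboolP.
by have := xgetPex 0%N ex2.
Qed.

Theorem lemma8 (R : realType) (alpha : R) (nu : probability R R)
  (d : measure_display) (T : measurableType d) (P : probability T R)
  (X : nat -> T -> R) (a : R) :
  0 < alpha ->
  (forall A : set R, measurable A -> nu [set x | A (- x)] = nu A) ->
  nu [set 0] = 0%E ->
  is_kendall_walk alpha nu P X ->
  0 <= a ->
  P [set w | weak_desc_ladder a X w = Some 1%N] = nu `]-oo, a]%classic /\
  (forall n : nat,
     P [set w | match weak_desc_ladder a X w with
                | Some k => (n.+1 < k)%N
                | None => True
                end]
     = ((2 ^- n)%:E * (1 - nu `]-oo, a]%classic))%E).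
Proof.
move=> a0 hsym _ [hX hP] ha.
pose A := fun n : nat => if n is 0 then setT else `]a, +oo[%classic.
have mA : forall k, measurable (A k) by case => //=; exact: measurable_itv.
have tail n : P [set w | forall k, (k <= n.+1)%N -> A k (X k w)] =
    ((2 ^- n)%:E * (1 - nu `]-oo, a]%classic))%E.
  rewrite hP // indicE in_setT mul1e path_tail // final_arith //.
have ev2 n : [set w | match weak_desc_ladder a X w with
                | Some k => (n.+1 < k)%N
                | None => True
                end] = [set w | forall k, (k <= n.+1)%N -> A k (X k w)].
  apply/seteqP; split => w /=.
  - have := first_hitP (fun j => (1 <= j)%N /\ X j w <= a).
    rewrite /weak_desc_ladder; case: (first_hit _) => [k [pk hmin]|hnone].
      move=> nk [|j] jn //=; rewrite in_itv /= andbT ltNge; apply/negP => hj.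
      have := leq_trans (hmin j.+1 (conj isT hj)) jn.
      by rewrite leqNgt nk.
    move=> _ [|j] jn //=; rewrite in_itv /= andbT ltNge; apply/negP => hj.
    exact: (hnone j.+1 (conj isT hj)).
  - move=> h; have := first_hitP (fun j => (1 <= j)%N /\ X j w <= a).
    rewrite /weak_desc_ladder; case: (first_hit _) => [k [[k1 xk] _]|//].
    rewrite ltnNge; apply/negP => kn; have := h k kn.
    case: k k1 xk kn => [//|k] _ xk _ /=; rewrite in_itv /= andbT.
    by rewrite ltNge xk.
split; last by move=> n; rewrite ev2 tail.
have ev1 : [set w | weak_desc_ladder a X w = Some 1%N] = X 1%N @^-1` `]-oo, a]%classic.
  apply/seteqP; split => w /=.
  - have := first_hitP (fun j => (1 <= j)%N /\ X j w <= a).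
    rewrite /weak_desc_ladder; case: (first_hit _) => [k [[k1 xk] _]|//] [<-].
    by rewrite in_itv.
  - rewrite in_itv /= => xw.
    have := first_hitP (fun j => (1 <= j)%N /\ X j w <= a).
    rewrite /weak_desc_ladder; case: (first_hit _) => [k [[k1 xk] hmin]|hnone].
      have := hmin 1%N (conj isT xw); case: k k1 {xk hmin} => [//|[|//]] _ _.
      by [].
    by exfalso; apply: (hnone 1%N).
have ev0 : [set w | forall k, (k <= 1)%N -> A k (X k w)] = X 1%N @^-1` `]a, +oo[%classic.
  apply/seteqP; split => w /=.
    by move=> h; apply: (h 1%N).
  by move=> h [|[|//]].
have m1 : measurable (X 1%N @^-1` `]-oo, a]%classic).
  by have := hX 1%N measurableT _ (measurable_itv `]-oo, a]); rewrite setTI.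
have m2 : measurable (X 1%N @^-1` `]a, +oo[%classic).
  by have := hX 1%N measurableT _ (measurable_itv `]a, +oo[); rewrite setTI.
have t0 := tail 0%N; rewrite ev0 expr0 invr1 mul1e in t0.
have eU : (P (X 1%N @^-1` `]-oo, a]%classic) + P (X 1%N @^-1` `]a, +oo[%classic))%E = 1%E.
  rewrite -measureU //.
    rewrite -(probability_setT P); congr (P _); apply/seteqP; split => x //= _.
    by rewrite !in_itv /= andbT; case: (leP (X 1%N x) a) => h; [left|right].
  apply/seteqP; split => x //=; rewrite !in_itv /= andbT => -[h1 h2].
  by have := le_lt_trans h1 h2; rewrite ltxx.
rewrite ev1; move: eU; rewrite t0.
have fF : nu `]-oo, a]%classic \is a fin_num by apply: fin_num_measure; exact: measurable_itv.
have fE : P (X 1%N @^-1` `]-oo, a]%classic) \is a fin_num by apply: fin_num_measure.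
rewrite -(fineK fF) -(fineK fE) -EFinB -EFinD => hh; have h := EFin_inj hh.
congr (_ %:E); lra.
Qed.
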